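(* Let $d\ge1$ and $s\in(-\tfrac12,\infty)$. Define $S_s:\mathbb{R}^{d\times d}\to\mathbb{R}^{d\times d}$ by $S_s(\mathbf A):=\mathbf U\mathbf H^{2s+1}\mathbf V^T$, where $\mathbf A=\mathbf U\mathbf H\mathbf V^T$ is a singular value decomposition ($\mathbf U,\mathbf V$ orthogonal, $\mathbf H$ diagonal with the nonnegative singular values $\sigma_1,\dots,\sigma_d$ of $\mathbf A$, and $\mathbf H^{2s+1}=\operatorname{diag}(\sigma_j^{2s+1})$); equivalently $S_s(\mathbf A)=(\mathbf A\mathbf A^T)^s\mathbf A$ whenever the latter is defined. Then for all $\mathbf A,\mathbf C\in\mathbb{R}^{d\times d}$, \[ (S_s(\mathbf A)-S_s(\mathbf C)):(\mathbf A-\mathbf C)\ge0. \]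
   Context: '':'' denotes the Frobenius inner product $\mathbf X:\mathbf Y=\sum_{i,j}X_{ij}Y_{ij}$. $S_s(\mathbf A)$ does not depend on the choice of singular value decomposition. *)

(* Defs.v *)
From HB Require Import structures.
From mathcomp Require Import all_boot all_order all_algebra.
From mathcomp Require Import reals exp.
Set Implicit Arguments. Unset Strict Implicit. Unset Printing Implicit Defensive.
Import Order.TTheory GRing.Theory Num.Theory.
Local Open Scope ring_scope.

Definition orthomx (R : realType) (d : nat) (U : 'M[R]_d) : Prop :=
  U *m U^T = 1%:M.

Definition is_svd (R : realType) (d : nat) (A U V : 'M[R]_d) (h : 'rV[R]_d) : Prop :=
  [/\ orthomx U, orthomx V, (forall j, 0 <= h 0 j) & A = U *m diag_mx h *m V^T].

Definition S_svd (R : realType) (d : nat) (s : R) (U V : 'M[R]_d) (h : 'rV[R]_d)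
  : 'M[R]_d :=
  U *m diag_mx (\row_j (powR (h 0 j) (2 * s + 1))) *m V^T.

Definition frob (R : realType) (d : nat) (X Y : 'M[R]_d) : R :=
  \sum_(i < d) \sum_(j < d) X i j * Y i j.

(* Main.v *)
Require Import Defs.
From HB Require Import structures.
From mathcomp Require Import all_boot all_order all_algebra.
From mathcomp Require Import reals exp.
From mathcomp Require Import ring lra.
Import Order.TTheory GRing.Theory Num.Theory.
Local Open Scope ring_scope.
Set Implicit Arguments.

Section H.
Variables (R : realType) (d : nat).

Lemma usvd_entry (U V : 'M[R]_d) (f : 'rV[R]_d) i j :
  (U *m diag_mx f *m V^T) i j = \sum_k U i k * f 0 k * V j k.
Proof.
rewrite mul_mx_diag !mxE; apply: eq_bigr => k _; by rewrite !mxE.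
Qed.

Lemma swap4 (F : 'I_d -> 'I_d -> 'I_d -> 'I_d -> R) :
  \sum_i \sum_j \sum_k \sum_l F i j k l = \sum_k \sum_l \sum_i \sum_j F i j k l.
Proof.
transitivity (\sum_i \sum_k \sum_l \sum_j F i j k l).
  apply: eq_bigr => i _; rewrite exchange_big; apply: eq_bigr => k _.
  by rewrite exchange_big.
rewrite exchange_big; apply: eq_bigr => k _; by rewrite exchange_big.
Qed.

Lemma frob_svd (U V W Z : 'M[R]_d) (f g : 'rV[R]_d) :
  frob (U *m diag_mx f *m V^T) (W *m diag_mx g *m Z^T) =
  \sum_k \sum_l f 0 k * g 0 l * (U^T *m W) k l * (V^T *m Z) k l.
Proof.
rewrite /frob.
transitivity (\sum_i \sum_j \sum_k \sum_l
   ((U i k * f 0 k * V j k) * (W i l * g 0 l * Z j l))).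
  apply: eq_bigr => i _; apply: eq_bigr => j _.
  rewrite !usvd_entry big_distrl; apply: eq_bigr => k _.
  by rewrite big_distrr.
rewrite swap4; apply: eq_bigr => k _; apply: eq_bigr => l _.
rewrite !mxE -mulrA big_distrl big_distrr /=; apply: eq_bigr => i _.
rewrite big_distrr big_distrr /=; apply: eq_bigr => j _.
rewrite !mxE; ring.
Qed.

Lemma frobB (X Y Z W : 'M[R]_d) :
  frob (X - Y) (Z - W) = frob X Z - frob X W - frob Y Z + frob Y W.
Proof.
rewrite /frob -!sumrB -big_split /=; apply: eq_bigr => i _.
rewrite -!sumrB -big_split /=; apply: eq_bigr => j _.
rewrite !mxE; ring.
Qed.

Lemma rowsum (U W : 'M[R]_d) : Defs.orthomx U -> Defs.orthomx W ->
  forall k, \sum_l (U^T *m W) k l ^+ 2 = 1.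
Proof.
move=> oU oW k.
have E : (U^T *m W) *m (U^T *m W)^T = 1%:M.
  by rewrite trmx_mul trmxK mulmxA -(mulmxA _ W) oW mulmx1 (mulmx1C oU).
have := congr1 (fun M : 'M[R]_d => M k k) E; rewrite !mxE eqxx mulr1n => <-.
by apply: eq_bigr => l _; rewrite !mxE expr2.
Qed.

Lemma colsum (U W : 'M[R]_d) : Defs.orthomx U -> Defs.orthomx W ->
  forall l, \sum_k (U^T *m W) k l ^+ 2 = 1.
Proof.
move=> oU oW l.
have E : (U^T *m W)^T *m (U^T *m W) = 1%:M.
  by rewrite trmx_mul trmxK mulmxA -(mulmxA _ U) oU mulmx1 (mulmx1C oW).
have := congr1 (fun M : 'M[R]_d => M l l) E; rewrite !mxE eqxx mulr1n => <-.
by apply: eq_bigr => k _; rewrite !mxE expr2.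
Qed.

Lemma term_ge0 (x y fx fy P Q : R) : 0 <= x -> 0 <= y -> 0 <= fx -> 0 <= fy ->
  0 <= (fx - fy) * (x - y) ->
  0 <= (P ^+ 2 + Q ^+ 2) / 2 * (fx * x) - fx * y * P * Q - x * fy * P * Q
       + (P ^+ 2 + Q ^+ 2) / 2 * (fy * y).
Proof.
move=> x0 y0 fx0 fy0 m.
have -> : (P ^+ 2 + Q ^+ 2) / 2 * (fx * x) - fx * y * P * Q - x * fy * P * Q
       + (P ^+ 2 + Q ^+ 2) / 2 * (fy * y) =
   (P ^+ 2 + Q ^+ 2) / 2 * ((fx - fy) * (x - y)) + (fx * y + x * fy) * ((P - Q) ^+ 2 / 2).
  by field.
apply: addr_ge0; apply: mulr_ge0 => //.
- apply: divr_ge0 => //; apply: addr_ge0; exact: sqr_ge0.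
- by apply: addr_ge0; apply: mulr_ge0.
- by apply: divr_ge0 => //; exact: sqr_ge0.
Qed.


End H.

Lemma delta_sum (R : realType) (d : nat) (F : 'I_d -> R) k :
  \sum_l F l * (1%:M : 'M[R]_d) k l * (1%:M : 'M[R]_d) k l = F k.
Proof.
rewrite (bigD1 k) //= !mxE eqxx mulr1 mulr1 big1 ?addr0 // => l lk.
by rewrite !mxE eq_sym (negbTE lk) mulr0.
Qed.

Lemma trP (R : realType) (d : nat) (U W : 'M[R]_d) k l :
  (W^T *m U) l k = (U^T *m W) k l.
Proof. by rewrite !mxE; apply: eq_bigr => i _; rewrite !mxE mulrC. Qed.

Theorem mainTheorem4 (R : realType) (d : nat) (s : R)
  (hd : (1 <= d)%N) (hs : - 2^-1 < s)
  (A C UA VA UC VC : 'M[R]_d) (hA hC : 'rV[R]_d) :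
  is_svd A UA VA hA -> is_svd C UC VC hC ->
  0 <= frob (S_svd s UA VA hA - S_svd s UC VC hC) (A - C).
Proof.
move=> [oUA oVA hA0 ->] [oUC oVC hC0 ->].
rewrite /S_svd frobB !frob_svd.
set p := 2 * s + 1.
have p0 : 0 <= p by rewrite /p; lra.
rewrite (mulmx1C oUA) (mulmx1C oVA) (mulmx1C oUC) (mulmx1C oVC).
set P := UA^T *m UC. set Q := VA^T *m VC.
pose M k l := (P k l ^+ 2 + Q k l ^+ 2) / 2.
have rs : forall k, \sum_l M k l = 1.
  move=> k; rewrite /M -big_distrl /= big_split /= (rowsum oUA oUC) (rowsum oVA oVC).
  by field.
have cs : forall l, \sum_k M k l = 1.
  move=> l; rewrite /M -big_distrl /= big_split /= (colsum oUA oUC) (colsum oVA oVC).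
  by field.
pose a k := hA 0 k. pose c k := hC 0 k.
pose fa k := hA 0 k `^ p. pose fc k := hC 0 k `^ p.
have E1 : \sum_k \sum_l (\row_j hA 0 j `^ p) 0 k * hA 0 l * (1%:M : 'M[R]_d) k l * (1%:M : 'M[R]_d) k l
   = \sum_k \sum_l M k l * (fa k * a k).
  apply: eq_bigr => k _.
  rewrite -big_distrl /= rs mul1r.
  rewrite (@delta_sum _ _ (fun l => (\row_j hA 0 j `^ p) 0 k * hA 0 l)) mxE //.
have E4 : \sum_k \sum_l (\row_j hC 0 j `^ p) 0 k * hC 0 l * (1%:M : 'M[R]_d) k l * (1%:M : 'M[R]_d) k l
   = \sum_k \sum_l M k l * (fc l * c l).
  rewrite [RHS]exchange_big /=; apply: eq_bigr => k _.
  rewrite -big_distrl /= cs mul1r.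
  rewrite (@delta_sum _ _ (fun l => (\row_j hC 0 j `^ p) 0 k * hC 0 l)) mxE //.
have E3 : \sum_k \sum_l (\row_j hC 0 j `^ p) 0 k * hA 0 l * (UC^T *m UA) k l * (VC^T *m VA) k l
   = \sum_k \sum_l a k * fc l * P k l * Q k l.
  rewrite exchange_big /=; apply: eq_bigr => k _; apply: eq_bigr => l _.
  by rewrite (@trP _ _ UA UC) (@trP _ _ VA VC) mxE (mulrC (hC 0 l `^ p)).
have E2 : \sum_k \sum_l (\row_j hA 0 j `^ p) 0 k * hC 0 l * P k l * Q k l
   = \sum_k \sum_l fa k * c l * P k l * Q k l.
  by apply: eq_bigr => k _; apply: eq_bigr => l _; rewrite mxE.
rewrite E1 E2 E3 E4 -!sumrB -big_split /=; apply: sumr_ge0 => k _.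
rewrite -!sumrB -big_split /=; apply: sumr_ge0 => l _.
apply: term_ge0; rewrite /a /c /fa /fc //; try exact: powR_ge0.
have [le|lt] := lerP (hA 0 k) (hC 0 l).
  have h : hA 0 k `^ p <= hC 0 l `^ p by apply: ge0_ler_powR => //; rewrite nnegrE.
  by rewrite -mulrNN; apply: mulr_ge0; rewrite oppr_ge0 subr_le0.
have h : hC 0 l `^ p <= hA 0 k `^ p by apply: ge0_ler_powR; rewrite ?nnegrE // ltW.
by apply: mulr_ge0; rewrite subr_ge0 // ltW.
Qed.
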